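(* Let $(X,d)$, $\mu$, $Y$ (countable), $f:X\to Y$ be as in the standing setting, and let $\kappa:\mathbb{Z}^+\to\mathbb{Z}^+$ satisfy $\sum_{n=1}^\infty\rho^{\kappa(n)}=\infty$ for every $0<\rho\le1$. Let $\{z_n\}$ be generated by $\mathcal{S}(\kappa,\Phi)$ where $\Phi$ is the non-modal count heuristic $\Phi(x,S)=|V_S(x)|-\operatorname{modefreq}_f(V_S(x))$ with $V_S(x)$ the set of Voronoi neighbors of $x$ with respect to $S$. If $x\in X$ is contained in an $f$-contiguous component of positive $\mu$-measure, then $\zeta_n(x)\to f(x)$ with probability one.
   Context: Standing setting: $(X,d)$ metric space with probability measure $\mu$; $Y$ countable; $f:X\to Y$; $X_y=f^{-1}(y)$; $B_\epsilon(x)$ open ball; $\operatorname{supp}(\mu)=\{x:\mu(B_\epsilon(x))>0\ \forall\epsilon>0\}$. A point $b$ is an $f$-boundary point iff $\mu(B_\epsilon(b)\setminus X_{f(b)})>0$ for all $\epsilon>0$. A set $R\subseteq X$ is $f$-connected iff it is connected and $R\subseteq X_y$ for some $y\in Y$; it is $f$-contiguous iff it is $f$-connected, $R\subseteq\operatorname{supp}(\mu)$, and $R$ contains no $f$-boundary points. An $f$-contiguous component is an $f$-contiguous set maximal under inclusion. Voronoi neighbors: $v\in S$ is a Voronoi neighbor of $x$ w.r.t. $S$ iff there is $c\in X$ with $d(x,c)<d(v,c)\le d(s,c)$ for all $s\in S$; $V_S(x)$ is the set of these. For finite $A\subseteq X$, $\operatorname{modefreq}_f(A)=\max_{y\in Y}|A\cap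 X_y|$ (and $0$ if $A=\emptyset$). Process $\mathcal{S}(\kappa,\Phi)$: $Z_0=\emptyset$; at step $n$ draw $\kappa(n)$ candidates i.i.d. from $\mu$, independent of the past, set $z_n$ to a candidate maximizing $\Phi(\cdot,Z_{n-1})$ (ties uniformly at random), $Z_n=\{z_1,\dots,z_n\}$. Nearest neighbor prediction: $\zeta_n(x)=f(z_\iota)$, $\iota=\arg\min_{i\le n}d(x,z_i)$, ties uniformly at random. *)

(* Defs.v *)
From HB Require Import structures.
From mathcomp Require Import all_boot all_order all_algebra.
From mathcomp Require Import all_classical all_reals all_analysis.
Set Implicit Arguments. Unset Strict Implicit. Unset Printing Implicit Defensive.
Import Order.TTheory GRing.Theory Num.Theory.
Local Open Scope classical_set_scope.
Local Open Scope ring_scope.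

Section Defs.
Context {R : realType}.

Definition is_metric {X : Type} (d : X -> X -> R) : Prop :=
  [/\ forall x y, 0 <= d x y,
      forall x y, d x y = 0 <-> x = y,
      forall x y, d x y = d y x &
      forall x y z, d x z <= d x y + d y z].

Definition oball {X : Type} (d : X -> X -> R) (x : X) (e : R) : set X :=
  [set y | d x y < e].

Definition dopen {X : Type} (d : X -> X -> R) (U : set X) : Prop :=
  forall x, U x -> exists2 e : R, 0 < e & oball d x e `<=` U.

Definition dconnected {X : Type} (d : X -> X -> R) (A : set X) : Prop :=
  forall U V : set X, dopen d U -> dopen d V ->
    A `<=` U `|` V -> A `&` U `&` V = set0 ->
    A `&` U = set0 \/ A `&` V = set0.

Context {dX : measure_display} {X : measurableType dX}.

Definition supp (mu : probability X R) (d : X -> X -> R) : set X :=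
  [set x | forall e : R, 0 < e -> (0 < mu (oball d x e))%E].

Definition fiber {Y : Type} (f : X -> Y) (y : Y) : set X := f @^-1` [set y].

Definition f_boundary {Y : Type} (mu : probability X R) (d : X -> X -> R)
  (f : X -> Y) (b : X) : Prop :=
  forall e : R, 0 < e -> (0 < mu (oball d b e `\` fiber f (f b)))%E.

Definition f_connected {Y : Type} (d : X -> X -> R) (f : X -> Y) (A : set X) :=
  dconnected d A /\ exists y, A `<=` fiber f y.

Definition f_contiguous {Y : Type} (mu : probability X R) (d : X -> X -> R)
  (f : X -> Y) (A : set X) : Prop :=
  [/\ f_connected d f A, A `<=` supp mu d & forall b, A b -> ~ f_boundary mu d f b].

Definition f_contiguous_component {Y : Type} (mu : probability X R)
  (d : X -> X -> R) (f : X -> Y) (A : set X) : Prop :=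
  f_contiguous mu d f A /\
  forall B, f_contiguous mu d f B -> A `<=` B -> B = A.

(* S is a finite set of points, given as a list *)
Definition voronoi_nb (d : X -> X -> R) (S : seq X) (x v : X) : Prop :=
  v \in S /\ exists c : X, d x c < d v c /\ forall s, s \in S -> d v c <= d s c.

Definition voronoi_set (d : X -> X -> R) (S : seq X) (x : X) : seq X :=
  undup [seq v <- S | `[< voronoi_nb d S x v >] ].

(* modefreq_f(A) for a duplicate-free list A (0 if A is empty) *)
Definition modefreq {Y : eqType} (f : X -> Y) (A : seq X) : nat :=
  \max_(y <- map f A) count (fun v => f v == y) A.

Definition nonmodal_count {Y : eqType} (d : X -> X -> R) (f : X -> Y)
  (x : X) (S : seq X) : nat :=
  (size (voronoi_set d S x) - modefreq f (voronoi_set d S x))%N.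

(* index in [0,k) best for the strict "better" order, earliest index kept
   when not strictly better *)
Definition argbest (better : nat -> nat -> bool) (k : nat) : nat :=
  foldl (fun b j => if better j b then j else b) 0%N (iota 1 k.-1).

Context {dO : measure_display} {Omega : measurableType dO}.

(* cand n j : j-th candidate drawn at step n (n >= 1);
   key n j  : uniform tie-breaking key of that candidate;
   Zs n w   : the list [z_1; ...; z_n]. *)
Fixpoint Zs (Phi : X -> seq X -> nat) (kappa : nat -> nat)
  (cand : nat -> nat -> Omega -> X) (key : nat -> nat -> Omega -> R)
  (n : nat) (w : Omega) : seq X :=
  match n with
  | 0 => [::]
  | n'.+1 =>
      let S := Zs Phi kappa cand key n' w in
      let sc j := Phi (cand n'.+1 j w) S in
      let better j b := (sc b < sc j)%N || ((sc j == sc b) && (key n'.+1 j w < key n'.+1 b w)) in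
      rcons S (cand n'.+1 (argbest better (kappa n'.+1)) w)
  end.

(* nearest-neighbour prediction zeta_n(x), ties broken by the uniform keys
   nkey n i (the smallest key among the nearest z_i wins) *)
Definition zeta {Y : Type} (d : X -> X -> R) (f : X -> Y)
  (Phi : X -> seq X -> nat) (kappa : nat -> nat)
  (cand : nat -> nat -> Omega -> X) (key : nat -> nat -> Omega -> R)
  (nkey : nat -> nat -> Omega -> R) (n : nat) (x : X) (w : Omega) : Y :=
  let Z := Zs Phi kappa cand key n w in
  let z i := nth point Z i in
  let better i b := (d x (z i) < d x (z b)) ||
                    ((d x (z i) == d x (z b)) && (nkey n i w < nkey n b w)) in
  f (z (argbest better n)).

Definition mutually_independent (P : probability Omega R) {I : eqType}
  (F : I -> set (set Omega)) : Prop :=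
  forall (J : seq I) (A : I -> set Omega), uniq J ->
    (forall i, i \in J -> F i (A i)) ->
    P (\bigcap_(i in [set` J]) A i) = \big[*%E/1%E]_(i <- J) P (A i).

Definition rv_sigma {dT} {T : measurableType dT} (Z : Omega -> T) : set (set Omega) :=
  [set Z @^-1` A | A in [set A : set T | measurable A]].

Definition proc_index := ((nat * nat) + ((nat * nat) + (nat * nat)))%type.

Definition proc_sigma (cand : nat -> nat -> Omega -> X)
  (key nkey : nat -> nat -> Omega -> R) (i : proc_index) : set (set Omega) :=
  match i with
  | inl (n, j) => rv_sigma (cand n j)
  | inr (inl (n, j)) => rv_sigma (key n j)
  | inr (inr (n, j)) => rv_sigma (nkey n j)
  end.

End Defs.

(* Main.v *)
Require Import Defs.
From HB Require Import structures.
From mathcomp Require Import all_boot all_order all_algebra.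
From mathcomp Require Import all_classical all_reals all_analysis.
From mathcomp Require Import ring lra.
Import Order.TTheory GRing.Theory Num.Theory.
Local Open Scope classical_set_scope.
Local Open Scope ring_scope.

Lemma foldl_lt (better : nat -> nat -> bool) k b0 s :
  (b0 < k)%N -> all (fun i => i < k)%N s ->
  (foldl (fun b j => if better j b then j else b) b0 s < k)%N.
Proof.
elim: s b0 => //= a s IH b0 hb /andP[ha hs]; apply: IH => //.
by case: ifP.
Qed.

Lemma argbest_lt better k : (0 < k)%N -> (argbest better k < k)%N.
Proof.
move=> k0; rewrite /argbest; apply: foldl_lt => //.
apply/allP => i; rewrite mem_iota => /andP[_]; by case: k k0.
Qed.

Lemma foldl_min (R : realType) (sc : nat -> R) (better : nat -> nat -> bool) :
  (forall j b, better j b -> sc j <= sc b) ->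
  (forall j b, ~~ better j b -> sc b <= sc j) ->
  forall s b0, sc (foldl (fun b j => if better j b then j else b) b0 s) <= sc b0 /\
     forall i, i \in s -> sc (foldl (fun b j => if better j b then j else b) b0 s) <= sc i.
Proof.
move=> h1 h2; elim=> [|a s IH] b0 /=; first by split.
have [IH1 IH2] := IH (if better a b0 then a else b0).
case: ifP IH1 IH2 => hb IH1 IH2.
- have := h1 _ _ hb => hab; split; first exact: le_trans IH1 hab.
  move=> i; rewrite inE => /orP[/eqP->|]; [exact IH1|exact: IH2].
- have := h2 a b0 (negbT hb) => hab; split => // i.
  rewrite inE => /orP[/eqP->|]; [exact: le_trans IH1 hab|exact: IH2].
Qed.

Lemma argbest_min (R : realType) (sc : nat -> R) (better : nat -> nat -> bool) k :
  (forall j b, better j b -> sc j <= sc b) ->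
  (forall j b, ~~ better j b -> sc b <= sc j) ->
  forall i, (i < k)%N -> sc (argbest better k) <= sc i.
Proof.
move=> h1 h2 i ik; have [H1 H2] := @foldl_min R sc better h1 h2 (iota 1 k.-1) 0%N.
rewrite /argbest; case: i ik => [|i] ik; first exact: H1.
apply: H2; rewrite mem_iota /=.
by case: k ik {H1} => // k; rewrite add1n.
Qed.
Section ZsL.
Context (R : realType) (dX : measure_display) (X : measurableType dX)
  (dO : measure_display) (Omega : measurableType dO)
  (Phi : X -> seq X -> nat) (kappa : nat -> nat)
  (cand : nat -> nat -> Omega -> X) (key : nat -> nat -> Omega -> R) (w : Omega).

Lemma Zs_size n : size (Zs Phi kappa cand key n w) = n.
Proof. by elim: n => //= n IH; rewrite size_rcons IH. Qed.

Lemma Zs_prefix m n : (m <= n)%N ->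
  exists s, Zs Phi kappa cand key n w = Zs Phi kappa cand key m w ++ s.
Proof.
elim: n => [|n IH]; first by rewrite leqn0 => /eqP ->; exists [::]; rewrite cats0.
rewrite leq_eqVlt => /orP[/eqP->|]; first by exists [::]; rewrite cats0.
rewrite ltnS => /IH [s hs]; eexists; rewrite /= hs -cats1 -catA; reflexivity.
Qed.

Lemma Zs_mem n z : z \in Zs Phi kappa cand key n w -> exists m j, z = cand m j w.
Proof.
elim: n => //= n IH; rewrite mem_rcons inE => /orP[/eqP->|/IH//].
by eexists; eexists.
Qed.

Lemma Zs_last n : nth point (Zs Phi kappa cand key n.+1 w) n =
  cand n.+1 (argbest (fun j b =>
     (Phi (cand n.+1 b w) (Zs Phi kappa cand key n w) <
      Phi (cand n.+1 j w) (Zs Phi kappa cand key n w))%N ||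
     ((Phi (cand n.+1 j w) (Zs Phi kappa cand key n w) ==
       Phi (cand n.+1 b w) (Zs Phi kappa cand key n w)) &&
      (key n.+1 j w < key n.+1 b w))) (kappa n.+1)) w.
Proof. by rewrite /= nth_rcons Zs_size ltnn eqxx. Qed.
End ZsL.
Lemma bigcap_foldr (T I : eqType) (A : I -> set T) (l : seq I) :
  \bigcap_(i in [set` l]) A i = foldr (fun i S => A i `&` S) setT l.
Proof.
apply/seteqP; split => t /=.
- move=> H; elim: l H => //= a l IH H; split; first by apply: H; rewrite /= inE eqxx.
  by apply: IH => i hi; apply: H; rewrite /= inE hi orbT.
- elim: l => //= a l IH [h1 h2] i; rewrite /= inE => /orP[/eqP->//|hi].
  exact: IH.
Qed.

Lemma foldrI (T I : Type) (C : I -> set T) S0 l :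
  foldr (fun j S => C j `&` S) S0 l = foldr (fun j S => C j `&` S) setT l `&` S0.
Proof. by elim: l => /=[|a l ->]; rewrite ?setTI ?setIA. Qed.

Lemma foldr_mem (T : Type) (I : eqType) (C : I -> set T) l t :
  foldr (fun j S => C j `&` S) setT l t -> forall j, j \in l -> C j t.
Proof.
elim: l => //= a l IH [h1 h2] j; rewrite inE => /orP[/eqP->//|]; exact: IH.
Qed.

Lemma foldr_memC (T : Type) (I : eqType) (C : I -> set T) l t :
  (forall j, j \in l -> C j t) -> foldr (fun j S => C j `&` S) setT l t.
Proof.
elim: l => //= a l IH H; split; first by apply: H; rewrite inE eqxx.
by apply: IH => j hj; apply: H; rewrite inE hj orbT.
Qed.

Section Indep.
Context (R : realType) (dX : measure_display) (X : measurableType dX)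
  (dO : measure_display) (Omega : measurableType dO) (P : probability Omega R)
  (cand : nat -> nat -> Omega -> X) (key nkey : nat -> nat -> Omega -> R)
  (kappa : nat -> nat) (B : set X) (rho : R)
  (mB : measurable B)
  (mcand : forall n j, measurable_fun setT (cand n j))
  (Pc : forall n j, P (cand n j @^-1` B) = rho%:E)
  (ind : mutually_independent P (proc_sigma cand key nkey)).

Definition Ablk n := foldr (fun j S => cand n j @^-1` B `&` S) setT (iota 0 (kappa n)).
Definition Dset Lr L := foldr (fun m S => Ablk m `&` S) setT Lr `&`
   foldr (fun n S => ~` Ablk n `&` S) setT L.

Lemma mpre n j : measurable (cand n j @^-1` B).
Proof. by rewrite -[_ @^-1` _]setTI; apply: mcand. Qed.

Lemma mfoldr (I : Type) (C : I -> set Omega) l :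
  (forall i, measurable (C i)) -> measurable (foldr (fun j S => C j `&` S) setT l).
Proof. by move=> h; elim: l => //= a l IH; apply: measurableI. Qed.

Lemma mAblk n : measurable (Ablk n).
Proof. by apply: mfoldr => j; apply: mpre. Qed.

Lemma mDset Lr L : measurable (Dset Lr L).
Proof.
apply: measurableI; apply: mfoldr => i; first exact: mAblk.
by apply: measurableC; apply: mAblk.
Qed.

Definition Jl (Lr : seq nat) : seq proc_index :=
  foldr (fun m J => [seq inl (m, j) | j <- iota 0 (kappa m)] ++ J) [::] Lr.

Definition Afun (i : proc_index) : set Omega :=
  match i with inl (m, j) => cand m j @^-1` B | _ => setT end.

Lemma Jl_mem Lr i : i \in Jl Lr -> exists m j, i = inl (m, j) /\ m \in Lr.
Proof.
elim: Lr => //= a Lr IH; rewrite mem_cat => /orP[/mapP[j _ ->]|/IH[m [j [-> hm]]]].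
- by exists a, j; rewrite inE eqxx.
- by exists m, j; rewrite inE hm orbT.
Qed.

Lemma Jl_uniq Lr : uniq Lr -> uniq (Jl Lr).
Proof.
elim: Lr => //= a Lr IH /andP[ha hu]; rewrite cat_uniq IH // andbT.
apply/andP; split.
- rewrite map_inj_uniq ?iota_uniq // => j1 j2 [] //.
- apply/hasPn => i /Jl_mem [m [j [-> hm]]]; apply/mapP => [[j' _ [e _]]].
  by move: ha; rewrite -e hm.
Qed.

Lemma Jl_foldr Lr :
  foldr (fun i S => Afun i `&` S) setT (Jl Lr) = foldr (fun m S => Ablk m `&` S) setT Lr.
Proof.
elim: Lr => //= a Lr IH; rewrite foldr_cat IH foldr_map foldrI /Ablk.
by rewrite (@foldrI _ _ (fun j => cand a j @^-1` B)).
Qed.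

Lemma Jl_prod Lr : (\big[*%E/1%E]_(i <- Jl Lr) P (Afun i))%E =
   (rho ^+ (\sum_(m <- Lr) kappa m))%:E.
Proof.
elim: Lr => [|a Lr IH]; first by rewrite big_nil big_nil expr0.
rewrite /= big_cat IH big_cons exprD big_map.
rewrite (eq_bigr (fun _ => rho%:E)) ?prodEFin; last by move=> j _; rewrite Pc.
rewrite -[LHS]/((_%:E) * (_%:E))%E.
rewrite -EFinM; congr EFin; congr (_ * _).
have -> : iota 0 (kappa a) = index_iota 0 (kappa a) by rewrite /index_iota subn0.
by rewrite prodr_const_nat subn0.
Qed.

Lemma base Lr : uniq Lr ->
  P (foldr (fun m S => Ablk m `&` S) setT Lr) = (rho ^+ (\sum_(m <- Lr) kappa m))%:E.
Proof.
move=> hu; rewrite -Jl_foldr -bigcap_foldr ind ?Jl_uniq ?Jl_prod //.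
move=> i /Jl_mem [m [j [-> _]]] /=; exists B => //.
Qed.

Lemma Dset_eq L Lr : uniq (Lr ++ L) -> P (Dset Lr L) =
  (rho ^+ (\sum_(m <- Lr) kappa m) * \prod_(n <- L) (1 - rho ^+ kappa n))%:E.
Proof.
elim: L Lr => [|n L IH] Lr hu.
  by rewrite /Dset /= setIT big_nil mulr1 base // -(cats0 Lr).
have hu' : uniq (n :: Lr ++ L).
  have hp : perm_eq (Lr ++ [:: n] ++ L) ([:: n] ++ Lr ++ L) by rewrite perm_catCA perm_refl.
  by rewrite -(perm_uniq hp).
have e1 : Dset Lr (n :: L) = Dset Lr L `\` Ablk n.
  by rewrite /Dset; apply/seteqP; split => w /=; tauto.
have e2 : Dset Lr L `&` Ablk n = Dset (n :: Lr) L.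
  by rewrite /Dset; apply/seteqP; split => w /=; tauto.
rewrite e1 measureD; [|exact: mDset|exact: mAblk|]; last first.
  by apply: (le_lt_trans (probability_le1 P (mDset Lr L))); exact: ltey.
move: hu' => /= /andP[hn hu2].
rewrite e2 !IH //; last by rewrite cat_cons /= hn.
rewrite -EFinB; congr EFin; rewrite big_cons big_cons exprD; ring.
Qed.

End Indep.

Lemma prod_bound (R : realType) (a : nat -> R) K : (forall i, 0 <= a i <= 1) ->
  (\prod_(i < K) (1 - a i)) * (1 + \sum_(i < K) a i) <= 1.
Proof.
move=> ha; elim: K => [|K IH]; first by rewrite !big_ord0 addr0 mulr1.
rewrite !big_ord_recr /=.
set p := \prod_(i < K) _; set s := \sum_(i < K) _.
have p0 : 0 <= p by apply: prodr_ge0 => i _; have := ha i; rewrite subr_ge0 => /andP[].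
have s0 : 0 <= s by apply: sumr_ge0 => i _; have := ha i => /andP[].
have /andP[a0 a1] := ha K.
have h : 0 <= p * (a K * s + a K ^+ 2).
  by apply: mulr_ge0 => //; apply: addr_ge0; [apply: mulr_ge0|apply: sqr_ge0].
have IH' : p * (1 + s) <= 1 := IH.
nra.
Qed.

Lemma prod_iota1 (R : realType) (F : nat -> R) K :
  \prod_(n <- iota 1 K) F n = \prod_(i < K) F i.+1.
Proof.
rewrite (_ : iota 1 K = iota (1 + 0) K) // iotaDl big_map.
have -> : iota 0 K = index_iota 0 K by rewrite /index_iota subn0.
rewrite big_mkord.
by apply: eq_bigr => i _; rewrite add1n.
Qed.

Theorem theorem3 (R : realType)
  (dX : measure_display) (X : measurableType dX) (d : X -> X -> R)
  (mu : probability X R) (Y : countType) (f : X -> Y)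
  (kappa : nat -> nat)
  (dO : measure_display) (Omega : measurableType dO) (P : probability Omega R)
  (cand : nat -> nat -> Omega -> X) (key nkey : nat -> nat -> Omega -> R) :
  (* (X,d) is a metric space whose measurable sets are its Borel sets *)
  is_metric d ->
  (@measurable _ X = <<s dopen d >>) ->
  (* the level sets X_y are measurable (so mu(B \ X_y) makes sense) *)
  (forall y, measurable (fiber f y)) ->
  (* kappa : Z+ -> Z+ with sum_n rho^kappa(n) = +oo for all 0 < rho <= 1 *)
  (forall n, (0 < n)%N -> (0 < kappa n)%N) ->
  (forall rho : R, 0 < rho <= 1 ->
     (fun N : nat => \sum_(n < N) rho ^+ kappa n.+1) @ \oo --> +oo) ->
  (* candidates are i.i.d. mu, tie-breaking keys are i.i.d. uniform on [0,1],
     and all of them are mutually independent *)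
  (forall n j, measurable_fun setT (cand n j)) ->
  (forall n j, measurable_fun setT (key n j)) ->
  (forall n j, measurable_fun setT (nkey n j)) ->
  (forall n j A, measurable A -> P (cand n j @^-1` A) = mu A) ->
  (forall n j (A : set R), measurable A ->
     P (key n j @^-1` A) = lebesgue_measure (A `&` `[0, 1])) ->
  (forall n j (A : set R), measurable A ->
     P (nkey n j @^-1` A) = lebesgue_measure (A `&` `[0, 1])) ->
  mutually_independent P (proc_sigma cand key nkey) ->
  forall x : X,
    (exists C : set X, [/\ f_contiguous_component mu d f C, C x,
                           measurable C & (0 < mu C)%E]) ->
    {ae P, forall w, exists N, forall n, (N <= n)%N ->
       zeta d f (nonmodal_count d f) kappa cand key nkey n x w = f x}.
Proof.
move=> Hmet Hmeas Hfib Hk0 Hdiv mcand _ _ Pc' _ _ ind x [C [[[_ Csupp Cnb] _] Cx _ _]].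
have xsupp := Csupp x Cx; have nb := Cnb x Cx.
have [e he] : exists e, ~ (0 < e -> (0 < mu (oball d x e `\` fiber f (f x)))%E).
  by apply/existsNP.
have e0 : 0 < e by apply: contrapT => ne; apply: he => /ne.
have mu0 : mu (oball d x e `\` fiber f (f x)) = 0%E.
  apply/eqP; rewrite eq_le measure_ge0 andbT leNgt; apply/negP => h; apply: he => _; exact h.
set B := oball d x e.
have mB : measurable B.
  rewrite Hmeas; apply: sub_sigma_algebra => y; rewrite /B /oball /= => hy.
  exists (e - d x y); first by rewrite subr_gt0.
  move=> z; rewrite /oball /= => hz; case: Hmet => _ _ _ tri; have := tri x y z; lra.
have mN0 : measurable (B `\` fiber f (f x)) by apply: measurableD.
set rho := fine (mu B).
have muB : mu B = rho%:E.
  rewrite fineK // ge0_fin_numE ?measure_ge0 //.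
  by apply: (le_lt_trans (probability_le1 mu mB)); exact: ltey.
have rho0 : 0 < rho by rewrite -lte_fin -muB; exact: xsupp.
have rho1 : rho <= 1 by rewrite -lee_fin -muB; exact: probability_le1.
have Pc : forall n j, P (cand n j @^-1` B) = rho%:E by move=> n j; rewrite Pc'.
set E2c := \bigcap_(n : nat) ~` Ablk _ _ _ _ cand kappa B n.+1.
have mE2 : measurable E2c.
  apply: bigcapT_measurable => n.
  exact: (measurableC (@mAblk _ _ _ _ cand kappa B mB mcand n.+1)).
have nE2 : P.-negligible E2c.
  apply/negligibleP => //.
  have hK : forall K, (P E2c <= (\prod_(i < K) (1 - rho ^+ kappa i.+1))%:E)%E.
    move=> K.
    have := @Dset_eq _ _ _ _ _ P cand key nkey kappa B rho mB mcand Pc ind (iota 1 K) [::] (iota_uniq _ _).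
    rewrite big_nil expr0 mul1r (@prod_iota1 R (fun n => 1 - rho ^+ kappa n)) => <-.
    apply: le_measure; rewrite ?inE //; first exact: (@mDset _ _ _ _ cand kappa B mB mcand).
    move=> w hw; split => //=; apply: foldr_memC => n; rewrite mem_iota.
    case: n => // n _; exact: hw.
  set p := fine (P E2c).
  have PE : P E2c = p%:E.
    rewrite fineK // ge0_fin_numE ?measure_ge0 //.
    by apply: (le_lt_trans (probability_le1 P mE2)); exact: ltey.
  have p0 : 0 <= p by rewrite -lee_fin -PE measure_ge0.
  transitivity (p%:E); first exact: PE. congr EFin; apply/eqP; rewrite eq_le p0 andbT.
  rewrite leNgt; apply/negP => pp.
  have /cvgryPge /(_ (1 / p)) := Hdiv rho (introT andP (conj rho0 rho1)).
  move=> [N _ HN]; have := HN N (leqnn N) => /= hS.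
  have := hK N; rewrite PE lee_fin => hpP.
  have := @prod_bound R (fun i => rho ^+ kappa i.+1) N.
  have hA : forall i : nat, 0 <= rho ^+ kappa i.+1 <= 1.
    by move=> i; apply/andP; split; [apply: exprn_ge0; exact: ltW | apply: exprn_ile1 => //; exact: ltW].
  move=> /(_ hA) hb.
  set S := \sum_(i < N) _ in hS hb; set Q := \prod_(i < N) _ in hpP hb.
  have S0 : 0 <= S by apply: sumr_ge0 => i _; have /andP[] := hA i.
  have : p * (1 + S) <= 1.
    apply: le_trans hb; apply: ler_wpM2r => //; lra.
  have : 1 < p * (1 + S).
    have h1 : p * (1 / p) = 1 by rewrite mul1r mulfV // gt_eqF.
    have : p * (1 / p) <= p * S by apply: ler_wpM2l => //; exact: ltW.
    rewrite h1 mulrDr mulr1; lra.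
  lra.
set N0 := B `\` fiber f (f x).
set E1c := \bigcup_(n : nat) \bigcup_(j : nat) (cand n j @^-1` N0).
have nE1 : P.-negligible E1c.
  apply: negligible_bigcup => n; apply: negligible_bigcup => j.
  apply/negligibleP; first by rewrite -[_ @^-1` _]setTI; apply: mcand.
  transitivity (mu N0); [exact: Pc' | exact: mu0].
apply: (negligibleS _ (negligibleU nE1 nE2)) => w /= hw.
apply: contrapT => hn; apply: hw.
have hE1 : forall n j, ~ N0 (cand n j w).
  by move=> n j h; apply: hn; left; exists n => //; exists j.
have [n hn2] : exists n, Ablk _ _ _ _ cand kappa B n.+1 w.
  by apply: contrapT => h; apply: hn; right => n _ ha; apply: h; exists n.
exists n.+1 => m hm.
have m0 : (0 < m)%N by apply: leq_trans hm.
have hzn : B (nth point (Zs (nonmodal_count d f) kappa cand key m w) n).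
  have [s hs] := @Zs_prefix _ _ _ _ _ (nonmodal_count d f) kappa cand key w n.+1 m hm.
  rewrite hs nth_cat Zs_size ltnSn Zs_last.
  have H := @foldr_mem _ _ (fun j => cand n.+1 j @^-1` B) (iota 0 (kappa n.+1)) w hn2.
  apply: (H _).
  rewrite mem_iota add0n; exact: argbest_lt (Hk0 _ _).
rewrite /zeta /=.
set Z := Zs (nonmodal_count d f) kappa cand key m w in hzn *.
set b := argbest _ m.
have hb : d x (nth point Z b) <= d x (nth point Z n).
  apply: (@argbest_min R (fun i => d x (nth point Z i))) => //.
  - by move=> j b' /orP[/ltW //|/andP[/eqP -> _]].
  - by move=> j b'; rewrite negb_or => /andP[h _]; rewrite leNgt.
have hBb : B (nth point Z b) by rewrite /B /oball /=; apply: le_lt_trans hb hzn.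
have : nth point Z b \in Z by apply: mem_nth; rewrite /Z Zs_size; exact: argbest_lt.
move=> /Zs_mem [m' [j ez]].
apply: contrapT => hne; apply: (hE1 m' j); rewrite -ez; split => //.
Qed.
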